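(* Let $\Omega\subset\mathbb{R}^2$ be a bounded domain and $h>0$, with the discrete setting described in the context. For a discrete triple $(\vec U^*,\vec v^*,\omega^* )$ with $\vec U^*=(U^*_x,U^*_y)$ a grid vector field on the edges, $\vec v^*\in\mathbb{R}^2$, $\omega^*\in\mathbb{R}$, define the discrete kinetic energy \[ E_h(\vec U^*,\vec v^*,\omega^* )=\tfrac12\sum_{i,j}\big((\rho H(U_x^* )^2)_{i+1/2,j}+(\rho H(U_y^* )^2)_{i,j+1/2}\big)h^2+\tfrac12m|\vec v^*|^2+\tfrac12\omega^*\mathbb{I}\omega^*. \] Let $p\in\{1_{\Omega^h}\}^\perp$ be the solution of $L^hp=-\operatorname{D}(H\vec U^* )+\vec v^*\cdot\operatorname{G}H+\omega^*\vec J^h$ in $\Omega^h$, and let \[ (\vec U,\vec v,\omega)=(\vec U^*,\vec v^*,\omega^* )-\Big(\tfrac1\rho\operatorname{G}p,\;\tfrac1m\sum_{k,l}(p\operatorname{G}H)_{kl}h^2,\;\mathbb{I}^{-1}\sum_{k,l}(p\vec J^h)_{kl}h^2\Big). \] Then $E_h(\vec U^*,\vec v^*,\omega^* )\ge E_h(\vec U,\vec v,\omega)$.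
   Context: Grid: $x_i=ih$, $y_j=jh$, $x_{i\pm1/2}=(i\pm\frac12)h$; $C_{ij}=[x_{i-1/2},x_{i+1/2}]\times[y_{j-1/2},y_{j+1/2}]$, edges $E_{i+1/2,j}=\{x_{i+1/2}\}\times[y_{j-1/2},y_{j+1/2}]$, $E_{i,j+1/2}=[x_{i-1/2},x_{i+1/2}]\times\{y_{j+1/2}\}$. $\Omega^h=\{(x_i,y_j):C_{ij}\cap\Omega\ne\emptyset\}$. Heaviside: $H_{i+1/2,j}=\mathrm{length}(E_{i+1/2,j}\cap\Omega)/h$, $H_{i,j+1/2}=\mathrm{length}(E_{i,j+1/2}\cap\Omega)/h$. $(\operatorname{G}_xp)_{i+1/2,j}=(p_{i+1,j}-p_{ij})/h$, $(\operatorname{G}_yp)_{i,j+1/2}=(p_{i,j+1}-p_{ij})/h$, $\operatorname{G}p=(\operatorname{G}_xp,\operatorname{G}_yp)$; $(\operatorname{D}(u,v))_{ij}=(u_{i+1/2,j}-u_{i-1/2,j})/h+(v_{i,j+1/2}-v_{i,j-1/2})/h$; $(\operatorname{G}H)_{ij}=((H_{i+1/2,j}-H_{i-1/2,j})/h,(H_{i,j+1/2}-H_{i,j-1/2})/h)$. $\vec J^h_{ij}=(\tilde{\vec x}_{ij}-\vec c)\times(\operatorname{G}H)_{ij}$ (planar cross product $a_1b_2-a_2b_1$), $\vec c\in\mathbb{R}^2$ fixed, $\tilde{\vec x}_{ij}=\frac12(\vec x+\vec y)$ if $\partial C_{ij}\cap\partial\Omega=\{\vec x,\vec y\}$ and $0$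 if $\partial C_{ij}\cap\partial\Omega=\emptyset$. Constants $\rho,m>0$, inertia $\mathbb{I}>0$ (scalar). $(L^hp)_{ij}=-(\operatorname{D}(\frac H\rho\operatorname{G}p))_{ij}+(\operatorname{G}H)_{ij}\cdot\frac1m\sum_{k,l}p_{kl}(\operatorname{G}H)_{kl}h^2+\vec J^h_{ij}\mathbb{I}^{-1}\sum_{k,l}p_{kl}\vec J^h_{kl}h^2$ for $p:\Omega^h\to\mathbb{R}$, sums over $\Omega^h$. $\{1_{\Omega^h}\}^\perp=\{p:\sum_{\Omega^h}p=0\}$. *)

(* Defs.v *)
From HB Require Import structures.
From mathcomp Require Import all_boot all_order all_algebra.
From mathcomp Require Import all_classical all_reals all_analysis.
Set Implicit Arguments. Unset Strict Implicit. Unset Printing Implicit Defensive.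
Import Order.TTheory GRing.Theory Num.Theory.
Local Open Scope classical_set_scope.
Local Open Scope ring_scope.
Import numFieldNormedType.Exports.

Section Grid.
Variable R : realType.

Definition gc (h : R) (k : int) : R := k%:~R * h.
Definition gch (h : R) (k : int) : R := (k%:~R + 2^-1) * h.
Definition gcmh (h : R) (k : int) : R := (k%:~R - 2^-1) * h.

Definition bdry {T : topologicalType} (A : set T) : set T :=
  closure A `\` interior A.

Definition cell (h : R) (ij : int * int) : set (R * R) :=
  [set z | gcmh h ij.1 <= z.1 <= gch h ij.1 /\ gcmh h ij.2 <= z.2 <= gch h ij.2].

Definition Omh (Om : set (R * R)) (h : R) : set (int * int) :=
  [set ij | cell h ij `&` Om !=set0].

(* Heaviside on vertical edges: Hx (i,j) = H_{i+1/2,j}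
   = length(E_{i+1/2,j} /\ Om) / h, length = 1D Lebesgue measure *)
Definition Hx (Om : set (R * R)) (h : R) (ij : int * int) : R :=
  fine (lebesgue_measure
    [set y : R | gcmh h ij.2 <= y <= gch h ij.2 /\ Om (gch h ij.1, y)]) / h.

(* Heaviside on horizontal edges: Hy (i,j) = H_{i,j+1/2} *)
Definition Hy (Om : set (R * R)) (h : R) (ij : int * int) : R :=
  fine (lebesgue_measure
    [set x : R | gcmh h ij.1 <= x <= gch h ij.1 /\ Om (x, gch h ij.2)]) / h.

(* edge functions: Ux (i,j) = U_{i+1/2,j}, Uy (i,j) = U_{i,j+1/2} *)
Definition Gx (h : R) (p : int * int -> R) (ij : int * int) : R :=
  (p (ij.1 + 1, ij.2)%R - p ij) / h.
Definition Gy (h : R) (p : int * int -> R) (ij : int * int) : R :=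
  (p (ij.1, ij.2 + 1)%R - p ij) / h.

Definition Dv (h : R) (Ux Uy : int * int -> R) (ij : int * int) : R :=
  (Ux ij - Ux (ij.1 - 1, ij.2)%R) / h + (Uy ij - Uy (ij.1, ij.2 - 1)%R) / h.

Definition GHx (Om : set (R * R)) (h : R) (ij : int * int) : R :=
  (Hx Om h ij - Hx Om h (ij.1 - 1, ij.2)%R) / h.
Definition GHy (Om : set (R * R)) (h : R) (ij : int * int) : R :=
  (Hy Om h ij - Hy Om h (ij.1, ij.2 - 1)%R) / h.

Definition xtilde_spec (Om : set (R * R)) (h : R) (xt : int * int -> R * R) : Prop :=
  forall ij : int * int,
    (forall a b : R * R, a != b ->
       @bdry (R * R)%type (cell h ij) `&` @bdry (R * R)%type Om = [set a] `|` [set b] ->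
       xt ij = ((a.1 + b.1) / 2, (a.2 + b.2) / 2)) /\
    (@bdry (R * R)%type (cell h ij) `&` @bdry (R * R)%type Om = set0 -> xt ij = (0, 0)).

Definition Jh (Om : set (R * R)) (h : R) (c : R * R) (xt : int * int -> R * R)
    (ij : int * int) : R :=
  ((xt ij).1 - c.1) * GHy Om h ij - ((xt ij).2 - c.2) * GHx Om h ij.

Definition sOmh (Om : set (R * R)) (h : R) (F : int * int -> R) : R :=
  \sum_(kl \in Omh Om h) (F kl * h ^+ 2).

Definition Lh (Om : set (R * R)) (h rho m I : R) (c : R * R)
    (xt : int * int -> R * R) (p : int * int -> R) (ij : int * int) : R :=
  - Dv h (fun e => Hx Om h e / rho * Gx h p e) (fun e => Hy Om h e / rho * Gy h p e) ij
  + (GHx Om h ij * (m^-1 * sOmh Om h (fun kl => p kl * GHx Om h kl))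
     + GHy Om h ij * (m^-1 * sOmh Om h (fun kl => p kl * GHy Om h kl)))
  + Jh Om h c xt ij * (I^-1 * sOmh Om h (fun kl => p kl * Jh Om h c xt kl)).

Definition Eh (Om : set (R * R)) (h rho m I : R) (Ux Uy : int * int -> R)
    (v : R * R) (w : R) : R :=
  2^-1 * (\sum_(ij \in [set: int * int])
            ((rho * Hx Om h ij * (Ux ij) ^+ 2 + rho * Hy Om h ij * (Uy ij) ^+ 2) * h ^+ 2))
  + 2^-1 * m * (v.1 ^+ 2 + v.2 ^+ 2) + 2^-1 * w * I * w.

Definition bounded2 (Om : set (R * R)) : Prop :=
  exists M : R, forall z, Om z -> `|z.1| <= M /\ `|z.2| <= M.

End Grid.

(* Main.v *)
Require Import Defs.
From HB Require Import structures.
From mathcomp Require Import all_boot all_order all_algebra.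
From mathcomp Require Import all_classical all_reals all_analysis.
From mathcomp Require Import ring lra zify finmap.
Import Order.TTheory GRing.Theory Num.Theory.
Local Open Scope classical_set_scope.
Local Open Scope ring_scope.
Import numFieldNormedType.Exports.

Lemma finite_intbox (n : nat) : finite_set [set k : int | `|k| <= n%:Z].
Proof.
apply: (@sub_finite_set _ _ ((fun k : nat => k%:Z) @` `I_n.+1 `|` (fun k : nat => - k%:Z) @` `I_n.+1)).
  move=> [a|a] /= H; [left|right].
    by exists a => //=.
  exists a.+1; last by rewrite NegzE.
  move: H; rewrite NegzE normrN /= ger0_norm //; lia.
rewrite finite_setU; split; apply: finite_image; exact: finite_II.
Qed.

Section Aux.
Variable R : realType.

Lemma idx_bound (h M x : R) (k : int) : 0 < h -> `|x| <= M ->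
  gcmh h k <= x <= gch h k -> `|k| <= Num.ceil (M / h + 1).
Proof.
move=> h0 xM /andP[l u]; rewrite /gcmh /gch in l u.
have x1 := ler_norm x. have x2 : - x <= `|x| by rewrite -normrN ler_norm.
have e1 : k%:~R * h <= M + h by nra.
have e2 : - k%:~R * h <= M + h by nra.
have EK : M / h + 1 = (M + h) / h by field; rewrite gt_eqF.
have c := ceil_ge (M / h + 1).
have f1 : (k%:~R : R) <= (Num.ceil (M / h + 1))%:~R.
  by apply: le_trans c; rewrite EK ler_pdivlMr.
have f2 : ((- k)%:~R : R) <= (Num.ceil (M / h + 1))%:~R.
  by apply: le_trans c; rewrite EK ler_pdivlMr // intrN.
rewrite ler_int in f1; rewrite ler_int in f2.
by rewrite ler_norml f1 andbT lerNl.
Qed.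


Definition box (c : int) := [set ij : int * int | `|ij.1| <= c /\ `|ij.2| <= c].

Lemma finite_box c : finite_set (box c).
Proof.
apply: (@sub_finite_set _ _ ([set k : int | `|k| <= (`|c|%N)%:Z] `*` [set k : int | `|k| <= (`|c|%N)%:Z])); last first.
  by apply: finite_setX; apply: finite_intbox.
move=> [a b] [/= ha hb]; split => /=; rewrite abszE; apply: (le_trans _ (ler_norm c)) => //.
Qed.

Lemma gc_le (h : R) k : 0 < h -> gcmh h k <= gch h k.
Proof. by move=> h0; rewrite /gcmh /gch; nra. Qed.

Lemma gch_pred (h : R) k : gch h (k - 1) = gcmh h k.
Proof. rewrite /gch /gcmh intrB -[(1%:~R : R)]/1; set a : R := k%:~R; rewrite mulrDl mulrBl mulrBl; lra. Qed.

Variables (Om : set (R * R)) (h : R).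

Lemma Hx_nz ij : Hx Om h ij != 0 ->
  exists y, (gcmh h ij.2 <= y <= gch h ij.2) /\ Om (gch h ij.1, y).
Proof.
move=> H; have [//|nE] := pselect (exists y, (gcmh h ij.2 <= y <= gch h ij.2) /\ Om (gch h ij.1, y)).
move: H; rewrite /Hx.
have -> : [set y | gcmh h ij.2 <= y <= gch h ij.2 /\ Om (gch h ij.1, y)] = set0.
  by apply/seteqP; split => y //= [a b]; apply: nE; exists y.
by rewrite measure0 mul0r eqxx.
Qed.

Lemma Hy_nz ij : Hy Om h ij != 0 ->
  exists x, (gcmh h ij.1 <= x <= gch h ij.1) /\ Om (x, gch h ij.2).
Proof.
move=> H; have [//|nE] := pselect (exists x, (gcmh h ij.1 <= x <= gch h ij.1) /\ Om (x, gch h ij.2)).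
move: H; rewrite /Hy.
have -> : [set x | gcmh h ij.1 <= x <= gch h ij.1 /\ Om (x, gch h ij.2)] = set0.
  by apply/seteqP; split => y //= [a b]; apply: nE; exists y.
by rewrite measure0 mul0r eqxx.
Qed.

Lemma Hx_ge0 ij : 0 < h -> 0 <= Hx Om h ij.
Proof. move=> h0; rewrite /Hx; apply: divr_ge0; [apply: fine_ge0; exact: measure_ge0 | exact: ltW]. Qed.
Lemma Hy_ge0 ij : 0 < h -> 0 <= Hy Om h ij.
Proof. move=> h0; rewrite /Hy; apply: divr_ge0; [apply: fine_ge0; exact: measure_ge0 | exact: ltW]. Qed.

Lemma notOmh ij : 0 < h -> ~ Omh Om h ij ->
  [/\ Hx Om h ij = 0, Hx Om h (ij.1 - 1, ij.2) = 0, Hy Om h ij = 0 & Hy Om h (ij.1, ij.2 - 1) = 0].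
Proof.
move=> h0 nO; have l1 := gc_le h ij.1 h0; have l2 := gc_le h ij.2 h0.
split; apply/eqP; apply: contra_notT nO.
- move=> /Hx_nz [y [yb Oy]]; exists (gch h ij.1, y); split => //=.
  by split => //; rewrite l1 lexx.
- move=> /Hx_nz [y [yb Oy]]; exists (gch h (ij.1 - 1), y); split => //=.
  by split => //; rewrite gch_pred l1 lexx.
- move=> /Hy_nz [x [xb Ox]]; exists (x, gch h ij.2); split => //=.
  by split => //; rewrite l2 lexx.
- move=> /Hy_nz [x [xb Ox]]; exists (x, gch h (ij.2 - 1)); split => //=.
  by split => //; rewrite gch_pred l2 lexx.
Qed.

Lemma Hx_fin : 0 < h -> bounded2 Om -> finite_set [set e | Hx Om h e != 0].
Proof.
move=> h0 [M BM]; apply: (sub_finite_set _ (finite_box (Num.ceil (M / h + 1)))).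
move=> e /Hx_nz [y [yb Oy]]; have [/= b1 b2] := BM _ Oy; split.
  by have := @idx_bound h M _ e.1 h0 b1; apply; rewrite lexx gc_le.
by have := @idx_bound h M _ e.2 h0 b2; apply.
Qed.

Lemma Hy_fin : 0 < h -> bounded2 Om -> finite_set [set e | Hy Om h e != 0].
Proof.
move=> h0 [M BM]; apply: (sub_finite_set _ (finite_box (Num.ceil (M / h + 1)))).
move=> e /Hy_nz [x [xb Ox]]; have [/= b1 b2] := BM _ Ox; split.
  by have := @idx_bound h M _ e.1 h0 b1; apply.
by have := @idx_bound h M _ e.2 h0 b2; apply; rewrite lexx gc_le.
Qed.

Lemma Omh_fin : 0 < h -> bounded2 Om -> finite_set (Omh Om h).
Proof.
move=> h0 [M BM]; apply: (sub_finite_set _ (finite_box (Num.ceil (M / h + 1)))).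
move=> e [z [[c1 c2] Oz]]; have [/= b1 b2] := BM _ Oz; split.
  by have := @idx_bound h M _ e.1 h0 b1; apply.
by have := @idx_bound h M _ e.2 h0 b2; apply.
Qed.



Local Notation S f := (\sum_(i \in [set: int * int]) (f : int * int -> R) i).

Definition fin (f : int * int -> R) := finite_set [set e | f e != 0].

Lemma S_fset (f : int * int -> R) (A : set (int * int)) : finite_set A ->
  (forall e, f e != 0 -> A e) -> S f = \sum_(i <- fset_set A) f i.
Proof.
move=> fA sub; apply: fsbigTE => i ni; apply/eqP; apply: contraNT ni => /sub Ai.
by rewrite in_fset_set //; apply: mem_set.
Qed.

Lemma S_D (f g : int * int -> R) : fin f -> fin g ->
  S (fun e => f e + g e) = S f + S g.
Proof.
move=> ff fg.
have fU : finite_set ([set e | f e != 0] `|` [set e | g e != 0]) by rewrite finite_setU.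
rewrite (S_fset _ _ fU); last first.
  move=> e ne; case: (eqVneq (f e) 0) => [f0|fn]; last by left.
  by right; move: ne; rewrite f0 add0r.
rewrite (S_fset f _ fU); last by move=> e ne; left.
rewrite (S_fset g _ fU); last by move=> e ne; right.
by rewrite big_split.
Qed.

Lemma S_Z c (f : int * int -> R) : S (fun e => c * f e) = c * S f.
Proof. by rewrite mulr_fsumr. Qed.

Lemma S_N (f : int * int -> R) : S (fun e => - f e) = - S f.
Proof. by rewrite -mulN1r -S_Z; apply: eq_fsbigr => e _; rewrite mulN1r. Qed.

Lemma S_B (f g : int * int -> R) : fin f -> fin g ->
  S (fun e => f e - g e) = S f - S g.
Proof.
move=> ff fg; rewrite S_D ?S_N //.
by apply: (sub_finite_set _ fg) => e /=; rewrite oppr_eq0.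
Qed.

Lemma fin_mulr (f g : int * int -> R) : fin f -> fin (fun e => f e * g e).
Proof.
move=> ff; apply: (sub_finite_set _ ff) => e /=; apply: contraNN => /eqP ->.
by rewrite mul0r.
Qed.

Lemma fin_mull (f g : int * int -> R) : fin g -> fin (fun e => f e * g e).
Proof.
move=> ff; apply: (sub_finite_set _ ff) => e /=; apply: contraNN => /eqP ->.
by rewrite mulr0.
Qed.

Lemma fin_add (f g : int * int -> R) : fin f -> fin g -> fin (fun e => f e + g e).
Proof.
move=> ff fg.
have fU : finite_set ([set e | f e != 0] `|` [set e | g e != 0]) by rewrite finite_setU.
apply: (sub_finite_set _ fU) => e /= ne.
case: (eqVneq (f e) 0) => [f0|fn]; last by left.
by right; move: ne; rewrite f0 add0r.
Qed.

Lemma fin_opp (f : int * int -> R) : fin f -> fin (fun e => - f e).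
Proof. by move=> ff; apply: (sub_finite_set _ ff) => e /=; rewrite oppr_eq0. Qed.

Lemma fin_comp (f : int * int -> R) s t : cancel s t -> fin f -> fin (fun e => f (s e)).
Proof.
move=> st ff; apply: (sub_finite_set _ (finite_image t ff)) => e /= ne.
by exists (s e) => //.
Qed.

Lemma sbp1 (F q : int * int -> R) s t : fin F -> cancel s t -> cancel t s ->
  S (fun e => F e * (q (t e) - q e)) = - S (fun e => q e * (F e - F (s e))).
Proof.
move=> fF st ts.
have fFs : fin (fun e => F (s e)) by apply: fin_comp st fF.
have -> : S (fun e => F e * (q (t e) - q e)) = S (fun e => F e * q (t e) - F e * q e).
  by apply: eq_fsbigr => e _; ring.
have -> : S (fun e => q e * (F e - F (s e))) = S (fun e => q e * F e - q e * F (s e)).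
  by apply: eq_fsbigr => e _; ring.
rewrite S_B; [|by apply: fin_mulr|by apply: fin_mulr].
rewrite S_B; [|by apply: fin_mull|by apply: fin_mull].
rewrite (reindex_fsbigT s (fun e => F e * q (t e))) /=; last by exists t.
have -> : S (fun e => F (s e) * q (t (s e))) = S (fun e => q e * F (s e)).
  by apply: eq_fsbigr => e _; rewrite st mulrC.
have -> : S (fun e => F e * q e) = S (fun e => q e * F e).
  by apply: eq_fsbigr => e _; rewrite mulrC.
ring.
Qed.

Definition sx (e : int * int) : int * int := (e.1 - 1, e.2)%R.
Definition tx (e : int * int) : int * int := (e.1 + 1, e.2)%R.
Definition sy (e : int * int) : int * int := (e.1, e.2 - 1)%R.
Definition ty (e : int * int) : int * int := (e.1, e.2 + 1)%R.

Lemma sxK : cancel sx tx. Proof. by case=> a b; rewrite /sx /tx /= subrK. Qed.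
Lemma txK : cancel tx sx. Proof. by case=> a b; rewrite /sx /tx /= addrK. Qed.
Lemma syK : cancel sy ty. Proof. by case=> a b; rewrite /sy /ty /= subrK. Qed.
Lemma tyK : cancel ty sy. Proof. by case=> a b; rewrite /sy /ty /= addrK. Qed.

Lemma sbp (hh : R) (F G q : int * int -> R) : hh != 0 -> fin F -> fin G ->
  S (fun e => (F e * Gx hh q e + G e * Gy hh q e) * hh ^+ 2) =
  S (fun e => q e * - Dv hh F G e * hh ^+ 2).
Proof.
move=> h0 fF fG.
have -> : S (fun e => (F e * Gx hh q e + G e * Gy hh q e) * hh ^+ 2) =
    S (fun e => hh * (F e * (q (tx e) - q e) + G e * (q (ty e) - q e))).
  by apply: eq_fsbigr => e _; rewrite /Gx /Gy /tx /ty; field.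
have -> : S (fun e => q e * - Dv hh F G e * hh ^+ 2) =
    S (fun e => hh * - (q e * (F e - F (sx e)) + q e * (G e - G (sy e)))).
  by apply: eq_fsbigr => e _; rewrite /Dv /sx /sy; field.
have fFs := @fin_comp F sx tx sxK fF; have fGs := @fin_comp G sy ty syK fG.
rewrite !S_Z S_N !S_D; try by [apply: fin_mulr | apply: fin_mull; apply: fin_add => //; apply: fin_opp].
rewrite (@sbp1 F q sx tx fF sxK txK) (@sbp1 G q sy ty fG syK tyK); ring.
Qed.

Lemma S_Omh (F G q : int * int -> R) : 0 < h ->
  (forall e, Hx Om h e = 0 -> F e = 0) -> (forall e, Hy Om h e = 0 -> G e = 0) ->
  S (fun e => q e * - Dv h F G e * h ^+ 2) = sOmh Om h (fun e => q e * - Dv h F G e).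
Proof.
move=> h0 FH GH; rewrite /sOmh; symmetry; apply: fsbig_widen => // e [_ nO].
have [a b c d] := @notOmh e h0 nO.
by rewrite /= /Dv (FH e a) (FH _ b) (GH e c) (GH _ d); ring.
Qed.

Lemma sOmh_D (f g : int * int -> R) : finite_set (Omh Om h) ->
  sOmh Om h (fun e => f e + g e) = sOmh Om h f + sOmh Om h g.
Proof.
move=> fO; rewrite /sOmh !fsbig_finite // -big_split; apply: eq_bigr => e _; by rewrite mulrDl.
Qed.

Lemma sOmh_Z c (f : int * int -> R) :
  sOmh Om h (fun e => c * f e) = c * sOmh Om h f.
Proof. rewrite /sOmh mulr_fsumr. apply: eq_fsbigr => e _. rewrite -mulrA. reflexivity. Qed.

Lemma main (rho m I : R) (c : R * R) (xt : int * int -> R * R)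
    (Usx Usy : int * int -> R) (vs : R * R) (ws : R) (p : int * int -> R) :
  bounded2 Om -> 0 < h -> 0 < rho -> 0 < m -> 0 < I ->
  (forall ij, Omh Om h ij ->
     Lh Om h rho m I c xt p ij =
       - Dv h (fun e => Hx Om h e * Usx e) (fun e => Hy Om h e * Usy e) ij
       + (vs.1 * GHx Om h ij + vs.2 * GHy Om h ij)
       + ws * Jh Om h c xt ij) ->
  Eh Om h rho m I Usx Usy vs ws >=
  Eh Om h rho m I
     (fun e => Usx e - rho^-1 * Gx h p e)
     (fun e => Usy e - rho^-1 * Gy h p e)
     (vs.1 - m^-1 * sOmh Om h (fun kl => p kl * GHx Om h kl),
      vs.2 - m^-1 * sOmh Om h (fun kl => p kl * GHy Om h kl))
     (ws - I^-1 * sOmh Om h (fun kl => p kl * Jh Om h c xt kl)).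
Proof.
move=> hb h0 r0 m0 I0 hL.
have hn : h != 0 by rewrite gt_eqF.
have rn : rho != 0 by rewrite gt_eqF.
have mn : m != 0 by rewrite gt_eqF.
have In : I != 0 by rewrite gt_eqF.
have fa := Hx_fin h0 hb; have fb := Hy_fin h0 hb; have fO := Omh_fin h0 hb.
have E1 := @sbp h _ _ p hn (@fin_mulr (Hx Om h) Usx fa) (@fin_mulr (Hy Om h) Usy fb).
have E3 := @sbp h _ _ p hn (@fin_mulr (fun e => Hx Om h e / rho) (Gx h p) (@fin_mulr (Hx Om h) (fun _ => rho^-1) fa))
                    (@fin_mulr (fun e => Hy Om h e / rho) (Gy h p) (@fin_mulr (Hy Om h) (fun _ => rho^-1) fb)).
rewrite /= in E1 E3.
have FH1 : forall e, Hx Om h e = 0 -> Hx Om h e * Usx e = 0 by move=> e ->; rewrite mul0r.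
have GH1 : forall e, Hy Om h e = 0 -> Hy Om h e * Usy e = 0 by move=> e ->; rewrite mul0r.
have FH3 : forall e, Hx Om h e = 0 -> Hx Om h e / rho * Gx h p e = 0 by move=> e ->; rewrite !mul0r.
have GH3 : forall e, Hy Om h e = 0 -> Hy Om h e / rho * Gy h p e = 0 by move=> e ->; rewrite !mul0r.
rewrite (@S_Omh _ _ p h0 FH1 GH1) in E1.
rewrite (@S_Omh _ _ p h0 FH3 GH3) in E3.
have fX : fin (fun i => (rho * Hx Om h i * Usx i ^+ 2 + rho * Hy Om h i * Usy i ^+ 2) * h ^+ 2).
  by apply: fin_mulr; apply: fin_add; apply: fin_mulr; apply: fin_mull.
have fT1 : fin (fun i => 2 * ((Hx Om h i * Usx i * Gx h p i + Hy Om h i * Usy i * Gy h p i) * h ^+ 2)).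
  by apply: fin_mull; apply: fin_mulr; apply: fin_add; apply: fin_mulr; apply: fin_mulr.
have fT3 : fin (fun i => (Hx Om h i / rho * Gx h p i * Gx h p i + Hy Om h i / rho * Gy h p i * Gy h p i) * h ^+ 2).
  by apply: fin_mulr; apply: fin_add; apply: fin_mulr; apply: fin_mulr; apply: fin_mulr.
have hY : \sum_(i \in [set: int * int])
   ((rho * Hx Om h i * (Usx i - rho^-1 * Gx h p i) ^+ 2 +
     rho * Hy Om h i * (Usy i - rho^-1 * Gy h p i) ^+ 2) * h ^+ 2) =
   \sum_(i \in [set: int * int]) ((rho * Hx Om h i * Usx i ^+ 2 + rho * Hy Om h i * Usy i ^+ 2) * h ^+ 2)
   - 2 * \sum_(i \in [set: int * int]) ((Hx Om h i * Usx i * Gx h p i + Hy Om h i * Usy i * Gy h p i) * h ^+ 2)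
   + \sum_(i \in [set: int * int]) ((Hx Om h i / rho * Gx h p i * Gx h p i + Hy Om h i / rho * Gy h p i * Gy h p i) * h ^+ 2).
  rewrite -S_Z -S_B // -S_D //; last by apply: fin_add => //; apply: fin_opp.
  by apply: eq_fsbigr => i _; field.
have hLs : sOmh Om h (fun e => p e * Lh Om h rho m I c xt p e) =
    sOmh Om h (fun e => p e * - Dv h (fun e0 => Hx Om h e0 / rho * Gx h p e0) (fun e0 => Hy Om h e0 / rho * Gy h p e0) e) + m^-1 * sOmh Om h (fun kl => p kl * GHx Om h kl) * sOmh Om h (fun kl => p kl * GHx Om h kl) + m^-1 * sOmh Om h (fun kl => p kl * GHy Om h kl) * sOmh Om h (fun kl => p kl * GHy Om h kl) + I^-1 * sOmh Om h (fun kl => p kl * Jh Om h c xt kl) * sOmh Om h (fun kl => p kl * Jh Om h c xt kl).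
  have -> : sOmh Om h (fun e => p e * Lh Om h rho m I c xt p e) =
     sOmh Om h (fun e => p e * - Dv h (fun e0 => Hx Om h e0 / rho * Gx h p e0) (fun e0 => Hy Om h e0 / rho * Gy h p e0) e + ((m^-1 * sOmh Om h (fun kl => p kl * GHx Om h kl)) * (p e * GHx Om h e) + (m^-1 * sOmh Om h (fun kl => p kl * GHy Om h kl)) * (p e * GHy Om h e)) + (I^-1 * sOmh Om h (fun kl => p kl * Jh Om h c xt kl)) * (p e * Jh Om h c xt e)).
    by rewrite /Lh; congr sOmh; apply: funext => e; ring.
  rewrite !sOmh_D // !sOmh_Z; ring.
have hRs : sOmh Om h (fun e => p e * (- Dv h (fun e => Hx Om h e * Usx e) (fun e => Hy Om h e * Usy e) e
       + (vs.1 * GHx Om h e + vs.2 * GHy Om h e) + ws * Jh Om h c xt e)) =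
    sOmh Om h (fun e => p e * - Dv h (fun e0 => Hx Om h e0 * Usx e0) (fun e0 => Hy Om h e0 * Usy e0) e) + vs.1 * sOmh Om h (fun kl => p kl * GHx Om h kl) + vs.2 * sOmh Om h (fun kl => p kl * GHy Om h kl) + ws * sOmh Om h (fun kl => p kl * Jh Om h c xt kl).
  have -> : sOmh Om h (fun e => p e * (- Dv h (fun e => Hx Om h e * Usx e) (fun e => Hy Om h e * Usy e) e
       + (vs.1 * GHx Om h e + vs.2 * GHy Om h e) + ws * Jh Om h c xt e)) =
     sOmh Om h (fun e => p e * - Dv h (fun e0 => Hx Om h e0 * Usx e0) (fun e0 => Hy Om h e0 * Usy e0) e + (vs.1 * (p e * GHx Om h e) + vs.2 * (p e * GHy Om h e)) + ws * (p e * Jh Om h c xt e)).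
    by congr sOmh; apply: funext => e; ring.
  rewrite !sOmh_D // !sOmh_Z; ring.
have hLR : sOmh Om h (fun e => p e * Lh Om h rho m I c xt p e) =
   sOmh Om h (fun e => p e * (- Dv h (fun e => Hx Om h e * Usx e) (fun e => Hy Om h e * Usy e) e
       + (vs.1 * GHx Om h e + vs.2 * GHy Om h e) + ws * Jh Om h c xt e)).
  by rewrite /sOmh; apply: eq_fsbigr => e /set_mem He; rewrite hL.
rewrite hLs hRs in hLR.
have P3ge : 0 <= sOmh Om h (fun e => p e * - Dv h (fun e0 => Hx Om h e0 / rho * Gx h p e0) (fun e0 => Hy Om h e0 / rho * Gy h p e0) e).
  rewrite -E3; apply: fsumr_ge0 => i _.
  apply: mulr_ge0; last exact: sqr_ge0.
  have ha := Hx_ge0 i h0; have hb' := Hy_ge0 i h0.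
  have ri : 0 < rho^-1 by rewrite invr_gt0.
  apply: addr_ge0; rewrite -mulrA; apply: mulr_ge0; (try by apply: mulr_ge0 => //; exact: ltW);
    by rewrite -expr2 sqr_ge0.
rewrite /Eh /= hY E1 E3.
move: hLR P3ge.
set X := \sum_(i \in _) _.
set P1s := sOmh Om h (fun e => p e * - Dv h (fun e0 => Hx Om h e0 * Usx e0) (fun e0 => Hy Om h e0 * Usy e0) e).
set P3s := sOmh Om h (fun e => p e * - Dv h (fun e0 => Hx Om h e0 / rho * Gx h p e0) (fun e0 => Hy Om h e0 / rho * Gy h p e0) e).
set Sxs := sOmh Om h (fun kl => p kl * GHx Om h kl).
set Sys := sOmh Om h (fun kl => p kl * GHy Om h kl).
set SJs := sOmh Om h (fun kl => p kl * Jh Om h c xt kl).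
move=> hLR P3ge.
have eP1 : P1s = P3s + m^-1 * Sxs * Sxs + m^-1 * Sys * Sys + I^-1 * SJs * SJs
   - vs.1 * Sxs - vs.2 * Sys - ws * SJs by rewrite hLR; ring.
rewrite -subr_ge0.
have -> : 2^-1 * X + 2^-1 * m * (vs.1 ^+ 2 + vs.2 ^+ 2) + 2^-1 * ws * I * ws -
  (2^-1 * (X - 2 * P1s + P3s) +
   2^-1 * m * ((vs.1 - m^-1 * Sxs) ^+ 2 + (vs.2 - m^-1 * Sys) ^+ 2) +
   2^-1 * (ws - I^-1 * SJs) * I * (ws - I^-1 * SJs)) =
  2^-1 * P3s + 2^-1 * m^-1 * Sxs ^+ 2 + 2^-1 * m^-1 * Sys ^+ 2 + 2^-1 * I^-1 * SJs ^+ 2.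
  by rewrite eP1; field; rewrite In mn.
have h2 : 0 <= (2 : R)^-1 by rewrite invr_ge0.
have mi : 0 <= m^-1 by rewrite invr_ge0 ltW.
have Ii : 0 <= I^-1 by rewrite invr_ge0 ltW.
repeat apply: addr_ge0; apply: mulr_ge0; rewrite ?sqr_ge0 ?mulr_ge0 //.
Qed.


End Aux.

Theorem theorem4p9 (R : realType) (Om : set (R * R)) (h rho m I : R)
    (c : R * R) (xt : int * int -> R * R)
    (Usx Usy : int * int -> R) (vs : R * R) (ws : R) (p : int * int -> R) :
  @open (R * R)%type Om -> @connected (R * R)%type Om -> Om !=set0 -> bounded2 Om ->
  0 < h -> 0 < rho -> 0 < m -> 0 < I ->
  xtilde_spec Om h xt ->
  (* p in {1_{Omega^h}}^perp *)
  \sum_(kl \in Omh Om h) p kl = 0 ->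
  (* L^h p = - D(H U* ) + v*.GH + w* J^h  in Omega^h *)
  (forall ij, Omh Om h ij ->
     Lh Om h rho m I c xt p ij =
       - Dv h (fun e => Hx Om h e * Usx e) (fun e => Hy Om h e * Usy e) ij
       + (vs.1 * GHx Om h ij + vs.2 * GHy Om h ij)
       + ws * Jh Om h c xt ij) ->
  Eh Om h rho m I Usx Usy vs ws >=
  Eh Om h rho m I
     (fun e => Usx e - rho^-1 * Gx h p e)
     (fun e => Usy e - rho^-1 * Gy h p e)
     (vs.1 - m^-1 * sOmh Om h (fun kl => p kl * GHx Om h kl),
      vs.2 - m^-1 * sOmh Om h (fun kl => p kl * GHy Om h kl))
     (ws - I^-1 * sOmh Om h (fun kl => p kl * Jh Om h c xt kl)).
Proof.
move=> _ _ _ hb h0 r0 m0 I0 _ _ hL.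
exact: main.
Qed.
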